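(* Let $\mathcal X$ be finite and $P_0,P_1,\hat P_0,\hat P_1$ distributions on $\mathcal X$ with full support satisfying $$0<D(P_0\|\hat P_1)-D(P_0\|\hat P_0),\qquad 0<D(P_1\|\hat P_0)-D(P_1\|\hat P_1).$$ Let $x_1,x_2,\dots$ be i.i.d. $P_0$, $\hat S_n=\sum_{i=1}^n\log\frac{\hat P_0(x_i)}{\hat P_1(x_i)}$, and for $\hat\gamma_0>0$ let $\hat\tau_0=\inf\{n\ge1:\hat S_n\ge\hat\gamma_0\}$. Define $\hat\kappa(s)=\log\mathbb E_{P_0}\big[(\hat P_1(X)/\hat P_0(X))^s\big]$, $E(0)=\sup_{s\ge0}\{-\hat\kappa(s)\}$ and let $d$ be the maximizing $s$. Then $E(0)>0$, $d>0$, and for every $n\ge1$, $$\mathbb P_0[\hat\tau_0\ge n]\le e^{d\hat\gamma_0}e^{-(n-1)E(0)}.$$ Moreover, $\hat\tau_0\to\infty$ almost surely as $\hat\gamma_0\to\infty$.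
   Context: $D$ is relative entropy; $\mathbb P_0,\mathbb E_{P_0}$ refer to i.i.d. observations with distribution $P_0$. $\hat\tau_0$ is the first time the mismatched log-likelihood ratio random walk of a sequential probability ratio test with test distributions $\hat P_0,\hat P_1$ crosses the upper threshold $\hat\gamma_0$. *)

(* Defs.v *)
From HB Require Import structures.
From mathcomp Require Import all_boot all_order all_algebra.
From mathcomp Require Import all_classical all_reals all_analysis.
Set Implicit Arguments. Unset Strict Implicit. Unset Printing Implicit Defensive.
Import Order.TTheory GRing.Theory Num.Theory.
Local Open Scope classical_set_scope.
Local Open Scope ring_scope.

Section Defs.
Variables (R : realType) (X : finType).

Definition fullsupp_dist (P : X -> R) : Prop :=
  (forall a, 0 < P a) /\ \sum_(a : X) P a = 1.

Definition relent (P Q : X -> R) : R := \sum_(a : X) P a * ln (P a / Q a).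

Definition llr (Ph0 Ph1 : X -> R) (a : X) : R := ln (Ph0 a / Ph1 a).

(* \hat S_k for the sample path x (x_1 = x 0, x_2 = x 1, ...) *)
Definition Shat (Ph0 Ph1 : X -> R) (x : nat -> X) (k : nat) : R :=
  \sum_(i < k) llr Ph0 Ph1 (x i).

(* \hat tau_0 = inf {n >= 1 : \hat S_n >= g}; None encodes +infinity *)
Definition tauhat (Ph0 Ph1 : X -> R) (g : R) (x : nat -> X) : option nat :=
  match pselect (exists n, (1 <= n)%N /\ g <= Shat Ph0 Ph1 x n) with
  | left H =>
      Some (ex_minn (P := fun n => `[< (1 <= n)%N /\ g <= Shat Ph0 Ph1 x n >])
              (let: ex_intro n Hn := H in ex_intro _ n (asboolT Hn)))
  | right _ => None
  end.

Definition ge_ext (t : option nat) (n : nat) : Prop :=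
  match t with None => True | Some m => (n <= m)%N end.

(* Probability, under x_1, x_2, ... i.i.d. P, of an event E on sample paths
   that is determined by the first m coordinates: sum over the length-m
   prefixes t of P^m(t) times the indicator that E holds for every path
   with prefix t. *)
Definition iid_prob (P : X -> R) (m : nat) (E : set (nat -> X)) : R :=
  \sum_(t : {ffun 'I_m -> X})
     (\prod_(i < m) P (t i)) *
     (if `[< forall x : nat -> X, (forall i : 'I_m, x i = t i) -> E x >]
      then 1 else 0).

Definition kappahat (P0 Ph0 Ph1 : X -> R) (s : R) : R :=
  ln (\sum_(a : X) P0 a * (Ph1 a / Ph0 a) `^ s).

Definition E0 (P0 Ph0 Ph1 : X -> R) : R :=
  sup [set y | exists2 s : R, 0 <= s & y = - kappahat P0 Ph0 Ph1 s].

End Defs.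

(* Main.v *)
Require Import Defs.
From HB Require Import structures.
From mathcomp Require Import all_boot all_order all_algebra.
From mathcomp Require Import all_classical all_reals all_analysis.
From mathcomp Require Import ring lra.
Import Order.TTheory GRing.Theory Num.Theory.
Import numFieldNormedType.Exports.
Local Open Scope classical_set_scope.
Local Open Scope ring_scope.

Lemma expR_up (R : realType) (y : R) : y <= 1/2 -> expR y <= 1 + y + 2 * y ^+ 2.
Proof.
move=> hy.
have h1 := expR_ge1Dx (- y).
have hE := expR_gt0 y.
have h2 : (1 - y) * expR y <= 1.
  have := ler_wpM2r (ltW hE) h1.
  by rewrite -expRD addNr expR0.
nra.
Qed.

Lemma contF (R : realType) (X : finType) (p c : X -> R) :
  continuous (fun s : R => \sum_(a : X) p a * expR (- (s * c a))).
Proof.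
move=> s.
suff H : forall r : seq X,
  {for s, continuous (fun s : R => \sum_(a <- r) p a * expR (- (s * c a)))}.
  exact: H.
elim=> [|a r IH].
  have -> : (fun s : R => \sum_(a <- [::]) p a * expR (- (s * c a))) = fun _ => 0.
    by apply/funext => ?; rewrite big_nil.
  exact: cst_continuous.
have -> : (fun s : R => \sum_(b <- a :: r) p b * expR (- (s * c b))) =
  (fun s : R => p a * expR (- (s * c a))) + (fun s : R => \sum_(b <- r) p b * expR (- (s * c b))).
  by apply/funext => ?; rewrite big_cons.
apply: continuousD => //.
apply: (continuousM (K := R) (T := R) (s := fun _ => p a) (t := fun s => expR (- (s * c a)))).
  exact: cst_continuous.
apply: (@continuous_comp _ _ _ (fun s : R => - (s * c a)) expR).
  apply: continuousN.
  apply: (continuousM (K := R) (T := R) (s := fun s => s) (t := fun _ => c a)).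
    exact: cvg_id.
  exact: cst_continuous.
exact: continuous_expR.
Qed.

Lemma tau_lt (R : realType) (X : finType) (Ph0 Ph1 : X -> R) g x m :
  0 < g -> ge_ext (tauhat Ph0 Ph1 g x) m.+1 -> Shat Ph0 Ph1 x m < g.
Proof.
move=> g0.
case: m => [|m]; first by rewrite /Shat big_ord0.
move=> hge; rewrite ltNge; apply/negP => hg; move: hge.
rewrite /tauhat; case: pselect => [H|H]; last first.
  by exfalso; apply: H; exists m.+1.
rewrite /=; case: ex_minnP => k _ hmin.
move=> hle; have : (k <= m.+1)%N by apply: hmin; exact/asboolP.
by rewrite leqNgt hle.
Qed.

Lemma tau_large (R : realType) (X : finType) (Ph0 Ph1 : X -> R) (x : nat -> X) (N : nat) :
  exists G : R, forall g : R, G < g -> ge_ext (tauhat Ph0 Ph1 g x) N.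
Proof.
exists (\sum_(k < N) `|Shat Ph0 Ph1 x k|) => g hg.
rewrite /tauhat; case: pselect => [H|//].
rewrite /=; case: ex_minnP => k /asboolP [hk1 hk2] _.
rewrite leqNgt; apply/negP => hkN.
have : `|Shat Ph0 Ph1 x k| <= \sum_(k < N) `|Shat Ph0 Ph1 x k|.
  rewrite (bigD1 (Ordinal hkN)) //= lerDl; apply: sumr_ge0 => i _; exact: normr_ge0.
have := ler_norm (Shat Ph0 Ph1 x k).
lra.
Qed.

Theorem lemma4 (R : realType) (X : finType) (P0 P1 Ph0 Ph1 : X -> R) :
  fullsupp_dist P0 -> fullsupp_dist P1 ->
  fullsupp_dist Ph0 -> fullsupp_dist Ph1 ->
  0 < relent P0 Ph1 - relent P0 Ph0 ->
  0 < relent P1 Ph0 - relent P1 Ph1 ->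
  [/\ 0 < E0 P0 Ph0 Ph1,
      (exists d : R, 0 <= d /\ - kappahat P0 Ph0 Ph1 d = E0 P0 Ph0 Ph1),
      (forall d : R, 0 <= d -> - kappahat P0 Ph0 Ph1 d = E0 P0 Ph0 Ph1 ->
         0 < d /\
         forall (g : R) (n : nat), 0 < g -> (1 <= n)%N ->
           iid_prob P0 n.-1 [set x | ge_ext (tauhat Ph0 Ph1 g x) n]
             <= expR (d * g) * expR (- ((n.-1)%:R * E0 P0 Ph0 Ph1)))
    & (forall (x : nat -> X) (N : nat),
         exists G : R, forall g : R, G < g -> ge_ext (tauhat Ph0 Ph1 g x) N)].
Proof.
move=> [P0pos P0sum] _ [H0pos H0sum] [H1pos H1sum] hrel _.
pose c := llr Ph0 Ph1.
pose F := fun s : R => \sum_(a : X) P0 a * expR (- (s * c a)).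
have kapF : forall s, kappahat P0 Ph0 Ph1 s = ln (F s).
  move=> s; rewrite /kappahat /F; congr ln; apply: eq_bigr => a _; congr (_ * _).
  rewrite /powR gt_eqF ?divr_gt0 // ln_div ?posrE // /c /llr ln_div ?posrE //.
  by congr expR; rewrite !mulrBr opprB.
have F0 : F 0 = 1.
  by rewrite /F; under eq_bigr do rewrite mul0r oppr0 expR0 mulr1; exact: P0sum.
have mudef : relent P0 Ph1 - relent P0 Ph0 = \sum_a P0 a * c a.
  rewrite /relent -sumrB; apply: eq_bigr => a _.
  rewrite /c /llr !ln_div ?posrE //; ring.
have [a1 ha1] : exists a, c a < 0.
  case: (pselect (exists a, c a < 0)) => // hn; exfalso.
  have hc : forall a, 0 <= c a.
    by move=> a; rewrite leNgt; apply/negP => h; apply: hn; exists a.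
  have hle : forall a, Ph1 a <= Ph0 a.
    by move=> a; have := hc a; rewrite /c /llr ln_div ?posrE // subr_ge0 ler_ln ?posrE.
  have heq : forall a, Ph0 a = Ph1 a.
    have : \sum_a (Ph0 a - Ph1 a) = 0 by rewrite sumrB H0sum H1sum subrr.
    move/psumr_eq0P => h a; apply/eqP; rewrite -subr_eq0; apply/eqP; apply: h => //.
    by move=> b _; rewrite subr_ge0.
  have : \sum_a P0 a * c a = 0.
    by apply: big1 => a _; rewrite /c /llr heq divff ?ln1 ?mulr0 // gt_eqF.
  lra.
have Fge : forall s a, P0 a * expR (- (s * c a)) <= F s.
  move=> s a; rewrite /F (bigD1 a) //= lerDl; apply: sumr_ge0 => b _.
  by apply: mulr_ge0; [exact: ltW | exact: expR_ge0].
have Fpos : forall s, 0 < F s.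
  move=> s; apply: lt_le_trans (Fge s a1); apply: mulr_gt0 => //; exact: expR_gt0.
pose mu := \sum_a P0 a * c a.
have mu0 : 0 < mu by rewrite /mu -mudef.
have [s0 [s00 Fs0]] : exists s, 0 < s /\ F s < 1.
  pose C := \sum_a `|c a| + 1.
  pose Q := \sum_a P0 a * c a ^+ 2.
  have hcC : forall a, `|c a| <= C.
    move=> a; rewrite /C (bigD1 a) //= -addrA lerDl addr_ge0 //.
    by apply: sumr_ge0 => b _; exact: normr_ge0.
  have C0 : 0 < C.
    have : 0 <= \sum_a `|c a| by apply: sumr_ge0 => b _; exact: normr_ge0.
    rewrite /C; lra.
  have Q0 : 0 <= Q.
    by apply: sumr_ge0 => b _; apply: mulr_ge0; [exact: ltW | exact: sqr_ge0].
  pose A := (2 * C)^-1.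
  pose B := mu / (2 * Q + 1).
  have A0 : 0 < A by rewrite /A invr_gt0; lra.
  have B0 : 0 < B by rewrite /B divr_gt0 //; lra.
  have [s [hs0 [hsA hsB]]] : exists s, 0 < s /\ s <= A /\ s < B.
    case: (leP A B) => h; [exists (A / 2) | exists (B / 2)]; split; try split; lra.
  have hAC : A * C = 1 / 2 by rewrite /A; field; lra.
  have hB : B * (2 * Q + 1) = mu by rewrite /B; field; lra.
  have hsC : s * C <= 1 / 2 by nra.
  have hsQ : s * (2 * Q + 1) < mu by nra.
  exists s; split => //.
  have : F s <= \sum_a P0 a * (1 + (- (s * c a)) + 2 * (- (s * c a)) ^+ 2).
    apply: ler_sum => a _; apply: ler_wpM2l; first exact: ltW.
    apply: expR_up.
    have := hcC a; have := ler_norm (- c a); rewrite normrN; nra.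
  have -> : \sum_a P0 a * (1 + (- (s * c a)) + 2 * (- (s * c a)) ^+ 2) =
     \sum_a P0 a + (- s) * mu + (2 * s ^+ 2) * Q.
    rewrite /mu /Q !mulr_sumr -!big_split /=; apply: eq_bigr => a _; ring.
  rewrite P0sum; nra.
have [d [d0 hmin]] : exists d, 0 <= d /\ forall s, 0 <= s -> F d <= F s.
  pose p := P0 a1; pose m := - c a1.
  have p0 : 0 < p by exact: P0pos.
  have m0 : 0 < m by rewrite /m; lra.
  pose K := (p * m)^-1.
  have K0 : 0 <= K by rewrite /K invr_ge0; apply: mulr_ge0; lra.
  have hK : K * (p * m) = 1 by rewrite /K mulVf //; apply: lt0r_neq0; exact: mulr_gt0.
  have cF : {within `[0, K], continuous F} by apply: continuous_subspaceT; exact: contF.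
  have [d hdI hd] := EVT_min K0 cF.
  move: (hdI); rewrite in_itv /= => /andP [hd0 hdK].
  exists d; split => // s hs.
  case: (leP s K) => hsK.
    by apply: hd; rewrite in_itv /= hs hsK.
  have h1 : F d <= 1 by rewrite -F0; apply: hd; rewrite in_itv /= lexx K0.
  have h2 := Fge s a1.
  have h3 := expR_ge1Dx (s * m).
  have h4 : - (s * c a1) = s * m by rewrite /m mulrN.
  rewrite h4 -/p in h2.
  have hpm : 0 < p * m by apply: mulr_gt0.
  have h5 : 1 < s * (p * m) by nra.
  have h6 : p * (1 + s * m) <= p * expR (s * m) by apply: ler_wpM2l; lra.
  nra.
pose E := - ln (F d).
have hE : E0 P0 Ph0 Ph1 = E.
  have memE : [set y | exists2 s : R, 0 <= s & y = - kappahat P0 Ph0 Ph1 s] E.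
    by exists d => //; rewrite kapF.
  have ubE : ubound [set y | exists2 s : R, 0 <= s & y = - kappahat P0 Ph0 Ph1 s] E.
    move=> y [s hs ->]; rewrite kapF lerN2 ler_ln ?posrE //; exact: hmin.
  rewrite /E0; apply/eqP; rewrite eq_le; apply/andP; split.
    by apply: ge_sup => //; exists E.
  by apply: (ub_le_sup _ memE); exists E.
have E0pos : 0 < E.
  have := hmin s0 (ltW s00).
  rewrite /E -ler_ln ?posrE // => h.
  have := ln_lt0 (x := F s0); rewrite Fpos Fs0 /= => /(_ isT) h'.
  lra.
split.
- by rewrite hE.
- by exists d; split => //; rewrite kapF hE.
- move=> dd hdd hkd; rewrite hE in hkd.
  rewrite kapF in hkd.
  have dd0 : 0 < dd.
    rewrite lt_neqAle hdd andbT; apply/eqP => hd0.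
    by move: hkd; rewrite -hd0 F0 ln1 oppr0 => h; move: E0pos; rewrite -h ltxx.
  have hFdd : F dd = expR (- E).
    by rewrite -hkd opprK lnK // posrE.
  split => // g n g0; case: n => [//|m] _ /=.
  rewrite hE.
  apply: (@le_trans _ _ (\sum_(t : {ffun 'I_m -> X})
     expR (dd * g) * \prod_(i < m) (P0 (t i) * expR (- (dd * c (t i)))))).
    apply: ler_sum => t _.
    have hP : 0 <= \prod_(i < m) P0 (t i).
      by apply: prodr_ge0 => i _; exact: ltW.
    case: asboolP => [H|_]; last first.
      rewrite mulr0; apply: mulr_ge0; first exact: expR_ge0.
      apply: prodr_ge0 => i _; apply: mulr_ge0; [exact: ltW | exact: expR_ge0].
    pose x := fun k : nat => if @insub _ _ 'I_m k is Some i then t i else a1.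
    have hx : forall i : 'I_m, x i = t i.
      by move=> i; rewrite /x (valK i).
    have hS := @tau_lt R X Ph0 Ph1 g x m g0 (H x hx).
    have hSe : Shat Ph0 Ph1 x m = \sum_(i < m) c (t i).
      by apply: eq_bigr => i _; rewrite hx.
    rewrite hSe in hS.
    rewrite big_split /= -expR_sum sumrN -mulr_sumr.
    set S := \sum_(i < m) c (t i) in hS *.
    set P := \prod_(i < m) P0 (t i) in hP *.
    have h1 : 1 <= expR (dd * g) * expR (- (dd * S)).
      rewrite -expRD; apply: le_trans (expR_ge1Dx _); nra.
    nra.
  rewrite -mulr_sumr.
  rewrite -(bigA_distr_bigA (fun (i : 'I_m) (a : X) => P0 a * expR (- (dd * c a)))) /=.
  rewrite prodr_const card_ord.
  have -> : \sum_a P0 a * expR (- (dd * c a)) = F dd by [].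
  by rewrite hFdd -expRM_natl mulrN.
- exact: tau_large.
Qed.
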